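(* The set of those $A\in\mathcal X$ for which there exist linearly independent $v_1,\dots,v_n\in\mathbb Z^n$ with $\mathcal S_1(A)=\{\pm v_1,\dots,\pm v_n\}$ is dense in $\mathcal X$.
   Context: $S_n=\mathrm{SO}_n\backslash\mathrm{SL}_n\mathbb R$; a point is represented by $A\in\mathrm{SL}_n\mathbb R$ up to left multiplication by $\mathrm{SO}_n$, with its usual topology. $\mathrm{syst}_1(A)=\min_{v\in\mathbb Z^n\setminus\{0\}}|Av|$, $\mathcal S_1(A)=\{v\in\mathbb Z^n:|Av|=\mathrm{syst}_1(A)\}$. $A$ is well-rounded if $\mathcal S_1(A)$ spans $\mathbb R^n$; $\mathcal X\subset S_n$ is the set of well-rounded points. *)

(* Defs.v *)
From Stdlib Require Import Reals ZArith Arith List.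
Open Scope R_scope.

(* Vectors in R^n / Z^n are functions nat -> R / nat -> Z, only indices < n matter.
   n x n real matrices are functions nat -> nat -> R (entry (i,j), i,j < n). *)

Fixpoint rsum (n : nat) (f : nat -> R) : R :=
  match n with
  | O => 0
  | S m => rsum m f + f m
  end.

Definition minor0 (M : nat -> nat -> R) (j : nat) : nat -> nat -> R :=
  fun a b => M (S a) (if Nat.ltb b j then b else S b).

Fixpoint det (n : nat) (M : nat -> nat -> R) : R :=
  match n with
  | O => 1
  | S m => rsum (S m) (fun j => (-1) ^ j * M O j * det m (minor0 M j))
  end.

Definition mat_zvec (n : nat) (A : nat -> nat -> R) (v : nat -> Z) : nat -> R :=
  fun i => rsum n (fun j => A i j * IZR (v j)).

Definition norm (n : nat) (x : nat -> R) : R := sqrt (rsum n (fun i => x i ^ 2)).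

Definition znonzero (n : nat) (v : nat -> Z) : Prop := exists k, (k < n)%nat /\ v k <> 0%Z.

Definition in_S1 (n : nat) (A : nat -> nat -> R) (v : nat -> Z) : Prop :=
  znonzero n v /\
  forall w, znonzero n w -> norm n (mat_zvec n A v) <= norm n (mat_zvec n A w).

Definition well_rounded (n : nat) (A : nat -> nat -> R) : Prop :=
  forall x : nat -> R, exists (l : list ((nat -> Z) * R)),
    (forall p, In p l -> in_S1 n A (fst p)) /\
    forall k, (k < n)%nat ->
      x k = fold_right (fun p acc => snd p * IZR (fst p k) + acc) 0 l.

Definition lin_indep (n : nat) (v : nat -> nat -> Z) : Prop :=
  forall c : nat -> R,
    (forall k, (k < n)%nat -> rsum n (fun i => c i * IZR (v i k)) = 0) ->
    forall i, (i < n)%nat -> c i = 0.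

Definition zeq (n : nat) (v w : nat -> Z) : Prop := forall k, (k < n)%nat -> v k = w k.

(* Main.v *)
Require Import Defs.
From Stdlib Require Import Reals ZArith Arith List Lra Lia Psatz Classical.
From Stdlib Require Import ClassicalEpsilon FunctionalExtensionality.
From HB Require structures.
From mathcomp Require all_boot all_algebra.
Open Scope R_scope.


Lemma rsum_ext n f g : (forall i, (i < n)%nat -> f i = g i) -> rsum n f = rsum n g.
Proof. induction n; intros H; simpl; [reflexivity|]. rewrite IHn by (intros; apply H; lia). rewrite H by lia. reflexivity. Qed.
Lemma rsum_plus n f g : rsum n (fun i => f i + g i) = rsum n f + rsum n g.
Proof. induction n; simpl; [ring|]. rewrite IHn; ring. Qed.
Lemma rsum_scal n c f : rsum n (fun i => c * f i) = c * rsum n f.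
Proof. induction n; simpl; [ring|]. rewrite IHn; ring. Qed.
Lemma rsum_scal_r n c f : rsum n (fun i => f i * c) = rsum n f * c.
Proof. induction n; simpl; [ring|]. rewrite IHn; ring. Qed.
Lemma rsum_zero n : rsum n (fun _ => 0) = 0.
Proof. induction n; simpl; [ring|]. rewrite IHn; ring. Qed.
Lemma rsum_opp n f : rsum n (fun i => - f i) = - rsum n f.
Proof. induction n; simpl; [ring|]. rewrite IHn; ring. Qed.
Lemma rsum_swap n m (f : nat -> nat -> R) :
  rsum n (fun i => rsum m (fun j => f i j)) = rsum m (fun j => rsum n (fun i => f i j)).
Proof. induction n; simpl. - symmetry; apply rsum_zero. - rewrite IHn, <- rsum_plus. reflexivity. Qed.
Definition delta (i j : nat) : R := if Nat.eqb i j then 1 else 0.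
Lemma rsum_delta_l n i f : (i < n)%nat -> rsum n (fun j => delta i j * f j) = f i.
Proof. induction n; intros H; simpl; [lia|]. unfold delta at 2. destruct (Nat.eqb_spec i n).
 - subst. rewrite (rsum_ext n _ (fun _ => 0)). rewrite rsum_zero; ring.
   intros j Hj; unfold delta; destruct (Nat.eqb_spec n j); [lia|ring].
 - rewrite IHn by lia; ring. Qed.
Lemma rsum_delta_r n i f : (i < n)%nat -> rsum n (fun j => f j * delta j i) = f i.
Proof. intros H. rewrite <- (rsum_delta_l n i f H). apply rsum_ext. intros j _.
 unfold delta. destruct (Nat.eqb_spec i j), (Nat.eqb_spec j i); try lia; ring. Qed.
Lemma rsum_nonneg n f : (forall i, (i < n)%nat -> 0 <= f i) -> 0 <= rsum n f.
Proof. induction n; intros H; simpl; [lra|]. assert (0 <= f n) by (apply H; lia).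
 assert (0 <= rsum n f) by (apply IHn; intros; apply H; lia). lra. Qed.
Lemma rsum_le n f g : (forall i, (i < n)%nat -> f i <= g i) -> rsum n f <= rsum n g.
Proof. induction n; intros H; simpl; [lra|]. assert (f n <= g n) by (apply H; lia).
 assert (rsum n f <= rsum n g) by (apply IHn; intros; apply H; lia). lra. Qed.
Lemma rsum_abs n f : Rabs (rsum n f) <= rsum n (fun i => Rabs (f i)).
Proof. induction n; simpl. - rewrite Rabs_R0; lra.
 - eapply Rle_trans; [apply Rabs_triang|]. lra. Qed.
Lemma rsum_term_le n f i : (forall j, (j < n)%nat -> 0 <= f j) -> (i < n)%nat -> f i <= rsum n f.
Proof. induction n; intros H Hi; simpl; [lia|].
 assert (0 <= rsum n f) by (apply rsum_nonneg; intros; apply H; lia).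
 destruct (Nat.eq_dec i n). - subst; lra.
 - assert (f i <= rsum n f) by (apply IHn; [intros; apply H; lia|lia]). assert (0 <= f n) by (apply H; lia). lra. Qed.
Lemma rsum_two_le n f i j : (forall k, (k < n)%nat -> 0 <= f k) -> (i < n)%nat -> (j < n)%nat -> i <> j ->
  f i + f j <= rsum n f.
Proof. induction n; intros H Hi Hj Hij; simpl; [lia|].
 assert (0 <= rsum n f) by (apply rsum_nonneg; intros; apply H; lia).
 assert (0 <= f n) by (apply H; lia).
 destruct (Nat.eq_dec i n); destruct (Nat.eq_dec j n); try lia.
 - subst. assert (f j <= rsum n f) by (apply rsum_term_le; [intros; apply H; lia|lia]). lra.
 - subst. assert (f i <= rsum n f) by (apply rsum_term_le; [intros; apply H; lia|lia]). lra.
 - assert (f i + f j <= rsum n f) by (apply IHn; [intros; apply H; lia|lia|lia|lia]). lra. Qed.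
Lemma rsum_single n f i : (i < n)%nat -> (forall j, (j < n)%nat -> j <> i -> f j = 0) -> rsum n f = f i.
Proof. intros Hi H. rewrite <- (rsum_delta_r n i f Hi). apply rsum_ext. intros j Hj.
 unfold delta. destruct (Nat.eqb_spec j i). - subst; ring. - rewrite H by auto; ring. Qed.

Inductive inspan (n : nat) (L : list (nat -> R)) : (nat -> R) -> Prop :=
| isp0 : inspan n L (fun _ => 0)
| ispadd : forall v c x, In v L -> inspan n L x -> inspan n L (fun k => c * v k + x k)
| ispext : forall x y, (forall k, (k < n)%nat -> x k = y k) -> inspan n L x -> inspan n L y.


Module LA.
Import HB.structures.
Import all_boot all_algebra.
Import GRing.Theory.
Set Implicit Arguments. Unset Strict Implicit.
Local Open Scope R_scope.

Definition Req_bool (x y : R) : bool := if Req_EM_T x y then true else false.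
Lemma Req_boolP : Equality.axiom Req_bool.
Proof. move=> x y; rewrite /Req_bool; case: Req_EM_T => H; by constructor. Qed.
HB.instance Definition _ := hasDecEq.Build R Req_boolP.
Definition Rfind (P : pred R) (n : nat) : option R :=
  match excluded_middle_informative (exists x, P x) with
  | left H => Some (proj1_sig (constructive_indefinite_description _ H))
  | right _ => None end.
Lemma Rfind_correct P n x : Rfind P n = Some x -> P x.
Proof. rewrite /Rfind; case: excluded_middle_informative => // H [<-].
by case: constructive_indefinite_description. Qed.
Lemma Rfind_complete (P : pred R) : (exists x, P x) -> exists n, Rfind P n.
Proof. move=> H; exists 0%N; rewrite /Rfind; by case: excluded_middle_informative. Qed.
Lemma Rfind_ext (P Q : pred R) : P =1 Q -> Rfind P =1 Rfind Q.
Proof. move=> H; have -> : P = Q by apply: functional_extensionality. by []. Qed.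
HB.instance Definition _ := hasChoice.Build R Rfind_correct Rfind_complete Rfind_ext.
Lemma RaddA : ssrfun.associative Rplus. Proof. move=>*; ring. Qed.
Lemma RaddC : ssrfun.commutative Rplus. Proof. move=>*; ring. Qed.
Lemma Radd0 : ssrfun.left_id 0 Rplus. Proof. move=>*; ring. Qed.
Lemma RaddN : ssrfun.left_inverse 0 Ropp Rplus. Proof. move=>*; ring. Qed.
HB.instance Definition _ := GRing.isZmodule.Build R RaddA RaddC Radd0 RaddN.
Lemma RmulA : ssrfun.associative Rmult. Proof. move=>*; ring. Qed.
Lemma RmulC : ssrfun.commutative Rmult. Proof. move=>*; ring. Qed.
Lemma Rmul1 : ssrfun.left_id 1 Rmult. Proof. move=>*; ring. Qed.
Lemma RmulD : ssrfun.left_distributive Rmult Rplus. Proof. move=>*; ring. Qed.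
Lemma R1n0 : 1 != 0. Proof. apply/eqP; exact R1_neq_R0. Qed.
HB.instance Definition _ := GRing.Zmodule_isComNzRing.Build R RmulA RmulC Rmul1 RmulD R1n0.
Definition Rinv' (x : R) := if Req_EM_T x 0 then 0 else Rinv x.
Lemma RmulV (x : R) : x != 0 -> (Rinv' x * x = 1).
Proof. move=> Hx; have H : x <> 0. { move=> E; move: Hx; rewrite E. by rewrite eqxx. }
rewrite /Rinv'; destruct (Req_EM_T x 0) as [E|E]; [contradiction | exact (Rinv_l x H)]. Qed.
Lemma Rinv0' : Rinv' 0 = 0. Proof. rewrite /Rinv'; destruct (Req_EM_T 0 0); [reflexivity|contradiction]. Qed.
HB.instance Definition _ := GRing.ComNzRing_isField.Build R RmulV Rinv0'.

Local Open Scope ring_scope.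
Definition mx n (M : nat -> nat -> R) : 'M[R]_n := \matrix_(i < n, j < n) M (i : nat) (j : nat).

Lemma rsum_big n f : rsum n f = \sum_(i < n) f (i : nat).
Proof. elim: n => [|n IH] /=; first by rewrite big_ord0.
by rewrite big_ord_recr /= IH. Qed.

Lemma pow_exp (x : R) k : pow x k = x ^+ k.
Proof. elim: k => [|k IH] //=; by rewrite exprS IH. Qed.

Lemma Rm1 : IZR (-1) = (-1 : R). Proof. reflexivity. Qed.
Lemma det_mx n M : det n M = \det (mx n M).
Proof.
elim: n M => [|n IH] M; first by rewrite det_mx00.
rewrite [det _ _]/det -/det (rsum_big n.+1) (expand_det_row _ ord0); apply: eq_bigr => j _.
rewrite /cofactor IH !mxE /= pow_exp add0n.
have -> : mx n (minor0 M j) = row' ord0 (col' j (mx n.+1 M)); last first.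
  set D := \det _. set a := (_ ^+ _). set b := M _ _.
  change (Rmult (Rmult a b) D = Rmult b (Rmult a D)). ring.
apply/matrixP => a b; rewrite !mxE /minor0 /= /bump /=.
congr (M _ _).
case: (ltnP b j) => H.
- have -> : (Nat.ltb b j) = true by apply/PeanoNat.Nat.ltb_lt; apply/ltP.
  by [].
- have -> : (Nat.ltb b j) = false by apply/PeanoNat.Nat.ltb_ge; apply/leP.
  by [].
Qed.

Definition nf n (A : 'M[R]_n) : nat -> nat -> R := fun i j =>
  match @insub nat (fun x => (x < n)%N) ('I_n) i, @insub nat (fun x => (x < n)%N) ('I_n) j with
  | Some a, Some b => A a b | _, _ => 0%R end.
Lemma nfE n (A : 'M[R]_n) (a b : 'I_n) : nf A a b = A a b.
Proof. by rewrite /nf !valK. Qed.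
Lemma mx_nf n (A : 'M[R]_n) : mx n (nf A) = A.
Proof. apply/matrixP => i j; by rewrite mxE nfE. Qed.

Lemma mx_ext n M N : (forall i j, (i < n)%coq_nat -> (j < n)%coq_nat -> M i j = N i j) -> mx n M = mx n N.
Proof. move=> H; apply/matrixP => i j; rewrite !mxE H //; apply/ltP; exact: ltn_ord. Qed.

Lemma mx_mul n M N : mx n (fun i k => rsum n (fun j => Rmult (M i j) (N j k))) = mx n M *m mx n N.
Proof. apply/matrixP => i k; rewrite !mxE rsum_big; apply: eq_bigr => j _; by rewrite !mxE. Qed.

Lemma delta_mx1 n (a b : 'I_n) : delta a b = (1%:M : 'M[R]_n) a b.
Proof. rewrite mxE /delta; case: (PeanoNat.Nat.eqb_spec a b) => H.
- have -> : a = b by apply: val_inj. by rewrite eqxx.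
- have -> : (a == b) = false by apply/negP => /eqP E; apply: H; rewrite E. by []. Qed.

Lemma det_ext n M N : (forall i j, (i < n)%coq_nat -> (j < n)%coq_nat -> M i j = N i j) -> det n M = det n N.
Proof. move=> H; by rewrite !det_mx (mx_ext H). Qed.

Lemma det_mul n M N : det n (fun i k => rsum n (fun j => Rmult (M i j) (N j k))) = Rmult (det n M) (det n N).
Proof. by rewrite !det_mx mx_mul det_mulmx. Qed.

Lemma det_inv n M : det n M <> 0%R -> exists Mi,
  (forall i k, (i < n)%coq_nat -> (k < n)%coq_nat -> rsum n (fun j => Rmult (Mi i j) (M j k)) = delta i k) /\
  (forall i k, (i < n)%coq_nat -> (k < n)%coq_nat -> rsum n (fun j => Rmult (M i j) (Mi j k)) = delta i k).
Proof.
move=> H.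
have U : mx n M \in unitmx by rewrite unitmxE unitfE -det_mx; apply/eqP.
exists (nf (invmx (mx n M))); split => i k Hi Hk.
- have Hi' : (i < n)%N by apply/ltP.
  have Hk' : (k < n)%N by apply/ltP.
  pose a := Ordinal Hi'; pose b := Ordinal Hk'.
  transitivity ((mx n (fun i k => rsum n (fun j => Rmult (nf (invmx (mx n M)) i j) (M j k)))) a b).
    by rewrite mxE.
  by rewrite mx_mul mx_nf mulVmx // -delta_mx1.
- have Hi' : (i < n)%N by apply/ltP.
  have Hk' : (k < n)%N by apply/ltP.
  pose a := Ordinal Hi'; pose b := Ordinal Hk'.
  transitivity ((mx n (fun i k => rsum n (fun j => Rmult (M i j) (nf (invmx (mx n M)) j k)))) a b).
    by rewrite mxE.
  by rewrite mx_mul mx_nf mulmxV // -delta_mx1.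
Qed.

Lemma det_scale n (c : R) M : det n (fun i j => Rmult c (M i j)) = Rmult (pow c n) (det n M).
Proof.
rewrite !det_mx pow_exp. transitivity (c ^+ n * \det (mx n M)); last by [].
rewrite -detZ; congr (\det _); apply/matrixP => i j; by rewrite !mxE.
Qed.

Lemma detE_replace n (c : nat -> R) i : (i < n)%coq_nat ->
  det n (fun l j => if Nat.eqb j i then c l else delta l j) = c i.
Proof.
case: n => [|n] Hi; first by move/ltP: Hi.
have Hi' : (i < n.+1)%N by apply/ltP.
pose a := Ordinal Hi'.
rewrite det_mx (expand_det_row _ a) (bigD1 a) //= big1 ?addr0.
- rewrite !mxE /= PeanoNat.Nat.eqb_refl /cofactor -signr_odd oddD addbb expr0 mul1r.
  have -> : row' a (col' a (mx n.+1 (fun l j => if Nat.eqb j i then c l else delta l j))) = 1%:M.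
    apply/matrixP => p q; rewrite !mxE /=.
    have -> : Nat.eqb (lift a q) i = false.
      apply/PeanoNat.Nat.eqb_neq => E. have : a != lift a q by exact: neq_lift.
      by rewrite (_ : lift a q = a) ?eqxx //; apply: val_inj.
    rewrite /delta; case: (PeanoNat.Nat.eqb_spec (lift a p) (lift a q)) => E.
    + have -> : p = q by apply: (@lift_inj _ a); apply: val_inj. by rewrite eqxx.
    + case: eqP => // Epq; by rewrite Epq in E.
  by rewrite det1 mulr1.
- move=> j Hj; rewrite !mxE /=.
  have -> : Nat.eqb j i = false.
    apply/PeanoNat.Nat.eqb_neq => E. move: Hj; by rewrite (_ : j = a) ?eqxx //; apply: val_inj.
  rewrite /delta; case: (PeanoNat.Nat.eqb_spec i j) => E; last by rewrite mul0r.
  move: Hj; by rewrite (_ : j = a) ?eqxx //; apply: val_inj.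
Qed.

Lemma det_replace n Y (c : nat -> R) i : (i < n)%coq_nat ->
  det n (fun k j => if Nat.eqb j i then rsum n (fun l => Rmult (Y k l) (c l)) else Y k j)
  = Rmult (c i) (det n Y).
Proof.
move=> Hi.
rewrite (@det_ext n _ (fun k j => rsum n (fun l => Rmult (Y k l) ((fun l j => if Nat.eqb j i then c l else delta l j) l j)))).
  by rewrite det_mul detE_replace // RmulC.
move=> k j Hk Hj /=. case: (PeanoNat.Nat.eqb j i) => //.
by rewrite (rsum_delta_r n j (fun l => Y k l)).
Qed.

Lemma size_length T (l : list T) : size l = length l.
Proof. by elim: l => //= x l ->. Qed.

Lemma span_det n (L : list (nat -> R)) : (forall x, inspan n L x) ->
  exists f : nat -> nat, (forall j, (j < n)%coq_nat -> (f j < length L)%coq_nat) /\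
    det n (fun k j => List.nth (f j) L (fun _ => 0%R) k) <> 0%R.
Proof.
move=> Hsp.
pose M : 'M[R]_(size L, n) := \matrix_(p, k) List.nth p L (fun _ => 0%R) k.
have Hrow : forall x, inspan n L x -> (\row_(k < n) x (k : nat) <= M)%MS.
  move=> x; elim => {x}.
  - have -> : \row_(k < n) (0%R : R) = 0 by apply/rowP => k; rewrite !mxE.
    exact: sub0mx.
  - move=> v c x Hv _ IH.
    have [p [Hp Hnth]] := In_nth L v (fun _ => 0%R) Hv.
    have Hp' : (p < size L)%N by rewrite size_length; apply/ltP.
    have -> : \row_(k < n) (Rplus (Rmult c (v k)) (x k)) = c *: row (Ordinal Hp') M + \row_(k < n) x (k : nat).
      by apply/rowP => k; rewrite !mxE /= Hnth.
    apply: addmx_sub => //; apply: scalemx_sub; exact: row_sub.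
  - move=> x y Hxy _ IH.
    have -> : \row_(k < n) y (k : nat) = \row_(k < n) x (k : nat).
      apply/rowP => k; rewrite !mxE Hxy //; apply/ltP; exact: ltn_ord.
    exact: IH.
have Hfull : row_full M.
  rewrite -sub1mx; apply/row_subP => k.
  have -> : row k (1%:M : 'M[R]_n) = \row_(j < n) delta k j.
    by apply/rowP => j; rewrite !mxE delta_mx1 mxE.
  exact: Hrow.
pose f' := fullrankfun Hfull.
have U := fullrowsub_unit Hfull.
exists (fun j => match @insub nat (fun x => (x < n)%N) ('I_n) j with Some a => val (f' a) | None => 0%N end).
split.
- move=> j Hj; have Hj' : (j < n)%N by apply/ltP.
  rewrite (insubT (fun x => (x < n)%N) Hj') /=; apply/ltP; rewrite -size_length; exact: ltn_ord.
- rewrite det_mx.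
  have -> : mx n (fun k j => List.nth (match @insub nat (fun x => (x < n)%N) ('I_n) j with Some a => val (f' a) | None => 0%N end) L (fun _ => 0%R) k) = (rowsub f' M)^T.
    apply/matrixP => k j; rewrite !mxE.
    rewrite (insubT (fun x => (x < n)%N) (ltn_ord j)) /=.
    by have -> : Sub (j:nat) (ltn_ord j) = j by apply: val_inj.
  move: U; rewrite unitmxE unitfE -det_tr => /eqP; done.
Qed.
End LA.

Lemma det_ext n M N : (forall i j, (i < n)%nat -> (j < n)%nat -> M i j = N i j) -> det n M = det n N.
Proof. exact (@LA.det_ext n M N). Qed.
Lemma det_mul n M N : det n (fun i k => rsum n (fun j => M i j * N j k)) = det n M * det n N.
Proof. exact (@LA.det_mul n M N). Qed.
Lemma det_inv n M : det n M <> 0 -> exists Mi,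
  (forall i k, (i < n)%nat -> (k < n)%nat -> rsum n (fun j => Mi i j * M j k) = delta i k) /\
  (forall i k, (i < n)%nat -> (k < n)%nat -> rsum n (fun j => M i j * Mi j k) = delta i k).
Proof. exact (@LA.det_inv n M). Qed.
Lemma det_scale n (c : R) M : det n (fun i j => c * M i j) = c ^ n * det n M.
Proof. exact (@LA.det_scale n c M). Qed.
Lemma det_replace n Y (c : nat -> R) i : (i < n)%nat ->
  det n (fun k j => if Nat.eqb j i then rsum n (fun l => Y k l * c l) else Y k j) = c i * det n Y.
Proof. exact (@LA.det_replace n Y c i). Qed.
Lemma span_det n (L : list (nat -> R)) : (forall x, inspan n L x) ->
  exists f : nat -> nat, (forall j, (j < n)%nat -> (f j < length L)%nat) /\
    det n (fun k j => List.nth (f j) L (fun _ => 0) k) <> 0.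
Proof. exact (@LA.span_det n L). Qed.


Definition matvec n (M : nat -> nat -> R) (x : nat -> R) : nat -> R :=
  fun i => rsum n (fun j => M i j * x j).
Definition zr (w : nat -> Z) : nat -> R := fun k => IZR (w k).
Definition dot n (x y : nat -> R) := rsum n (fun k => x k * y k).
Definition sq n x := dot n x x.

Lemma mat_zvec_matvec n A w : mat_zvec n A w = matvec n A (zr w).
Proof. reflexivity. Qed.

Lemma sq_nonneg n x : 0 <= sq n x.
Proof. unfold sq, dot. apply rsum_nonneg. intros. nra. Qed.

Lemma norm_sq n x : norm n x = sqrt (sq n x).
Proof. unfold norm, sq, dot. f_equal. apply rsum_ext. intros; ring. Qed.

Lemma norm_le_iff n x y : norm n x <= norm n y <-> sq n x <= sq n y.
Proof. rewrite !norm_sq. split; intros H.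
 - apply sqrt_le_0; auto using sq_nonneg.
 - apply sqrt_le_1_alt; auto. Qed.

Lemma dot_comm n x y : dot n x y = dot n y x.
Proof. unfold dot. apply rsum_ext; intros; ring. Qed.

Lemma sq_add n x z s : sq n (fun k => x k + s * z k) = sq n x + 2 * s * dot n x z + s^2 * sq n z.
Proof. unfold sq, dot. rewrite <- !rsum_scal, <- !rsum_plus. apply rsum_ext; intros; ring. Qed.

Lemma sq_opp n x : sq n (fun k => - x k) = sq n x.
Proof. unfold sq, dot. apply rsum_ext; intros; ring. Qed.

Lemma sq_ext n x y : (forall k, (k < n)%nat -> x k = y k) -> sq n x = sq n y.
Proof. intros H; unfold sq, dot; apply rsum_ext; intros; rewrite H; auto. Qed.

Lemma sq_scal n c x : sq n (fun k => c * x k) = c^2 * sq n x.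
Proof. unfold sq, dot. rewrite <- rsum_scal. apply rsum_ext; intros; ring. Qed.

Lemma comp_le_norm n x k : (k < n)%nat -> Rabs (x k) <= sqrt (sq n x).
Proof. intros Hk. rewrite <- sqrt_Rsqr_abs. apply sqrt_le_1_alt.
 unfold sq, dot, Rsqr. apply (rsum_term_le n (fun k => x k * x k)); auto. intros; nra. Qed.

Lemma matvec_inv n M N x i : (forall i k, (i < n)%nat -> (k < n)%nat -> rsum n (fun j => M i j * N j k) = delta i k) ->
  (i < n)%nat -> rsum n (fun l => M i l * rsum n (fun j => N l j * x j)) = x i.
Proof. intros H Hi.
 transitivity (rsum n (fun j => rsum n (fun l => M i l * N l j) * x j)).
 - rewrite (rsum_ext n (fun l => M i l * rsum n (fun j => N l j * x j)) (fun l => rsum n (fun j => M i l * N l j * x j))).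
   + rewrite rsum_swap. apply rsum_ext. intros j _. rewrite <- rsum_scal_r. reflexivity.
   + intros l _. rewrite <- rsum_scal. apply rsum_ext; intros; ring.
 - rewrite (rsum_ext n _ (fun j => delta i j * x j)). apply rsum_delta_l; auto.
   intros j Hj. rewrite H; auto. Qed.

Lemma matvec_inj n M N x y : (forall i k, (i < n)%nat -> (k < n)%nat -> rsum n (fun j => N i j * M j k) = delta i k) ->
  (forall k, (k < n)%nat -> matvec n M x k = matvec n M y k) -> forall k, (k < n)%nat -> x k = y k.
Proof. intros H Hxy k Hk. rewrite <- (matvec_inv n N M x k H Hk), <- (matvec_inv n N M y k H Hk).
 apply rsum_ext. intros l Hl. f_equal. apply Hxy; auto. Qed.

Lemma rsum_bound n f b : (forall i, (i < n)%nat -> Rabs (f i) <= b) -> Rabs (rsum n f) <= INR n * b.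
Proof. induction n; intros H; cbn [rsum]. - rewrite Rabs_R0; simpl; lra.
 - eapply Rle_trans; [apply Rabs_triang|]. rewrite S_INR.
   assert (Rabs (rsum n f) <= INR n * b) by (apply IHn; intros; apply H; lia).
   assert (Rabs (f n) <= b) by (apply H; lia). lra. Qed.

Lemma rsum_lt n f g : (0 < n)%nat -> (forall i, (i < n)%nat -> f i < g i) -> rsum n f < rsum n g.
Proof. induction n; intros Hn H; simpl; [lia|]. destruct n.
 - simpl. assert (f 0%nat < g 0%nat) by (apply H; lia). lra.
 - assert (rsum (S n) f < rsum (S n) g) by (apply IHn; [lia| intros; apply H; lia]).
   assert (f (S n) < g (S n)) by (apply H; lia). lra. Qed.

Lemma fin_min m (P : nat -> R -> Prop) :
  (forall j d d', 0 < d' <= d -> P j d -> P j d') ->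
  (forall j, (j < m)%nat -> exists d, 0 < d /\ P j d) -> exists d, 0 < d /\ forall j, (j < m)%nat -> P j d.
Proof. intros Hmono. induction m; intros H.
 - exists 1; split; [lra| intros; lia].
 - destruct IHm as [d1 [Hd1 H1]]. { intros; apply H; lia. }
   destruct (H m) as [d2 [Hd2 H2]]; [lia|].
   exists (Rmin d1 d2); split. { apply Rmin_pos; auto. }
   intros j Hj. destruct (Nat.eq_dec j m).
   + subst. apply (Hmono m d2); auto. split; [apply Rmin_pos; auto| apply Rmin_r].
   + apply (Hmono j d1); [split; [apply Rmin_pos; auto|apply Rmin_l]|]. apply H1; lia. Qed.

Lemma prod_cont (a b eta : R) : 0 < eta -> exists da db, 0 < da /\ 0 < db /\
  forall a' b', Rabs (a' - a) < da -> Rabs (b' - b) < db -> Rabs (a' * b' - a * b) < eta.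
Proof. intros He.
 assert (Hb : 0 < Rabs b + 1) by (pose proof (Rabs_pos b); lra).
 assert (Ha : 0 < Rabs a + 1) by (pose proof (Rabs_pos a); lra).
 exists (eta / (2 * (Rabs b + 1))), (Rmin 1 (eta / (2 * (Rabs a + 1)))).
 split; [apply Rdiv_lt_0_compat; lra|]. split; [apply Rmin_pos; [lra|apply Rdiv_lt_0_compat; lra]|].
 intros a' b' H1 H2.
 replace (a' * b' - a * b) with ((a' - a) * b' + a * (b' - b)) by ring.
 eapply Rle_lt_trans; [apply Rabs_triang|]. rewrite !Rabs_mult.
 assert (Hb' : Rabs b' <= Rabs b + 1).
 { assert (Rabs (b' - b) < 1) by (eapply Rlt_le_trans; [exact H2| apply Rmin_l]).
   pose proof (Rabs_triang (b' - b) b). replace (b' - b + b) with b' in H0 by ring. lra. }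
 assert (H3 : Rabs (a' - a) * Rabs b' < eta / 2).
 { apply Rle_lt_trans with (Rabs (a' - a) * (Rabs b + 1)). { apply Rmult_le_compat_l; auto using Rabs_pos. }
   replace (eta / 2) with (eta / (2 * (Rabs b + 1)) * (Rabs b + 1)) by (field; lra).
   apply Rmult_lt_compat_r; lra. }
 assert (H4 : Rabs a * Rabs (b' - b) < eta / 2).
 { apply Rle_lt_trans with ((Rabs a + 1) * Rabs (b' - b)). { apply Rmult_le_compat_r; auto using Rabs_pos; lra. }
   replace (eta / 2) with ((Rabs a + 1) * (eta / (2 * (Rabs a + 1)))) by (field; lra).
   apply Rmult_lt_compat_l; [lra|]. eapply Rlt_le_trans; [exact H2|apply Rmin_r]. }
 lra. Qed.

Lemma rsum_const m c : rsum m (fun _ => c) = INR m * c.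
Proof. induction m; cbn [rsum]. - simpl; ring. - rewrite IHm, S_INR; ring. Qed.

Lemma det_cont n : forall M eta, 0 < eta -> exists del, 0 < del /\ forall N,
  (forall i j, (i < n)%nat -> (j < n)%nat -> Rabs (N i j - M i j) < del) -> Rabs (det n N - det n M) < eta.
Proof. induction n; intros M eta He.
 - exists 1; split; [lra|]. intros N _. simpl. rewrite Rminus_diag, Rabs_R0; lra.
 - set (e2 := eta / INR (S n)).
   assert (He2 : 0 < e2) by (unfold e2; apply Rdiv_lt_0_compat; [lra| apply lt_0_INR; lia]).
   destruct (fin_min (S n) (fun j d => forall N, (forall i k, (i < S n)%nat -> (k < S n)%nat -> Rabs (N i k - M i k) < d) ->
      Rabs ((-1)^j * N 0%nat j * det n (minor0 N j) - (-1)^j * M 0%nat j * det n (minor0 M j)) < e2)) as [d [Hd HP]].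
   + intros j d d' Hdd HPj N HN. apply HPj. intros; eapply Rlt_le_trans; [apply HN; auto|lra].
   + intros j Hj. destruct (prod_cont (M 0%nat j) (det n (minor0 M j)) e2 He2) as [da [db [Hda [Hdb Hab]]]].
     destruct (IHn (minor0 M j) db Hdb) as [dd [Hdd Hmin]].
     exists (Rmin da dd); split; [apply Rmin_pos; auto|].
     intros N HN.
     replace ((-1)^j * N 0%nat j * det n (minor0 N j) - (-1)^j * M 0%nat j * det n (minor0 M j))
       with ((-1)^j * (N 0%nat j * det n (minor0 N j) - M 0%nat j * det n (minor0 M j))) by ring.
     rewrite Rabs_mult, pow_1_abs, Rmult_1_l. apply Hab.
     * eapply Rlt_le_trans; [apply HN; lia|apply Rmin_l].
     * apply Hmin. intros a b Ha Hb. unfold minor0.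
       eapply Rlt_le_trans; [apply HN|apply Rmin_r]; [lia|]. destruct (Nat.ltb b j); lia.
   + exists d; split; auto. intros N HN. cbn [det].
     rewrite <- (Rabs_Ropp), Ropp_minus_distr. rewrite <- Rabs_Ropp, Ropp_minus_distr.
     replace (rsum (S n) (fun j => (-1) ^ j * N 0%nat j * det n (minor0 N j)) -
              rsum (S n) (fun j => (-1) ^ j * M 0%nat j * det n (minor0 M j)))
       with (rsum (S n) (fun j => (-1) ^ j * N 0%nat j * det n (minor0 N j) - (-1) ^ j * M 0%nat j * det n (minor0 M j))).
     2:{ unfold Rminus. rewrite rsum_plus, rsum_opp. reflexivity. }
     eapply Rle_lt_trans; [apply rsum_abs|].
     apply Rlt_le_trans with (rsum (S n) (fun _ => e2)).
     * apply rsum_lt; [lia|]. intros j Hj. apply (HP j Hj N HN).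
     * right. rewrite rsum_const. unfold e2. field. apply not_0_INR; lia. Qed.

Lemma list_min {T} (l : list T) (P : T -> Prop) (f : T -> R) :
  (exists x, In x l /\ P x) -> exists x, In x l /\ P x /\ forall y, In y l -> P y -> f x <= f y.
Proof. induction l as [|a l IH]; intros [x [Hx HP]]; [destruct Hx|].
 destruct (classic (exists x, In x l /\ P x)) as [E|E].
 - destruct (IH E) as [y [Hy [HPy Hmin]]].
   destruct (classic (P a /\ f a < f y)) as [[HPa Hlt]|N].
   + exists a. split; [left; auto|split; auto]. intros z [<-|Hz] HPz; [lra|]. specialize (Hmin z Hz HPz); lra.
   + exists y. split; [right; auto|split; auto]. intros z [E'|Hz] HPz; [|auto]. subst z.
     destruct (Rle_dec (f y) (f a)); auto. exfalso; apply N; split; auto; lra.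
 - exists a. destruct Hx as [<-|Hx]; [|exfalso; apply E; eauto].
   split; [left; auto|split; auto]. intros z [<-|Hz] HPz; [lra|]. exfalso; apply E; eauto. Qed.

Lemma list_gap {T} (l : list T) (f : T -> R) (m : R) :
  exists m2, m < m2 /\ m2 <= m + 1 /\ forall x, In x l -> m < f x -> m2 <= f x.
Proof. induction l as [|a l IH].
 - exists (m + 1). split; [lra|split; [lra|]]. intros x [].
 - destruct IH as [m2 [H1 [H2 H3]]]. destruct (Rlt_dec m (f a)).
   + exists (Rmin m2 (f a)). split; [apply Rmin_glb_lt; auto|]. split; [eapply Rle_trans; [apply Rmin_l|auto]|].
     intros x [<-|Hx] Hfx; [apply Rmin_r|]. eapply Rle_trans; [apply Rmin_l|auto].
   + exists m2. split; auto. split; auto. intros x [<-|Hx] Hfx; [lra|auto]. Qed.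

Lemma list_filter_ex {T} (l : list T) (P : T -> Prop) : exists l', forall x, In x l' <-> In x l /\ P x.
Proof. induction l as [|a l IH].
 - exists nil. intros x; simpl; tauto.
 - destruct IH as [l' H]. destruct (classic (P a)).
   + exists (a :: l'). intros x; simpl. rewrite H. split; [intros [<-|[]]; auto|]. intros [[<-|Hx] Hp]; auto.
   + exists l'. intros x; simpl. rewrite H. split; [tauto|]. intros [[<-|Hx] Hp]; [contradiction|auto]. Qed.

Definition upd (w : nat -> Z) (n : nat) (z : Z) : nat -> Z := fun k => if Nat.eqb k n then z else w k.
Definition zrange_list (N : nat) : list Z := map (fun i => (Z.of_nat i - Z.of_nat N)%Z) (seq 0 (2 * N + 1)).
Fixpoint zbox (n N : nat) : list (nat -> Z) :=
  match n with O => (fun _ => 0%Z) :: nil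
  | S m => flat_map (fun w => map (upd w m) (zrange_list N)) (zbox m N) end.

Lemma zrange_in N z : (Z.abs z <= Z.of_nat N)%Z -> In z (zrange_list N).
Proof. intros H. unfold zrange_list. apply in_map_iff. exists (Z.to_nat (z + Z.of_nat N)).
 split; [lia|]. apply in_seq. lia. Qed.

Lemma zbox_complete n N w : (forall k, (k < n)%nat -> (Z.abs (w k) <= Z.of_nat N)%Z) ->
  exists w', In w' (zbox n N) /\ zeq n w w'.
Proof. revert w; induction n; intros w H.
 - exists (fun _ => 0%Z). split; [left; auto|]. intros k Hk; lia.
 - destruct (IHn w) as [w' [Hin Heq]]. { intros; apply H; lia. }
   exists (upd w' n (w n)). split.
   + simpl. apply in_flat_map. exists w'. split; auto. apply in_map. apply zrange_in. apply H; lia.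
   + intros k Hk. unfold upd. destruct (Nat.eqb_spec k n). { subst; auto. } apply Heq; lia. Qed.

Fixpoint tups (n len : nat) : list (nat -> nat) :=
  match n with O => (fun _ => O) :: nil
  | S m => flat_map (fun t => map (fun p => fun j => if Nat.eqb j m then p else t j) (seq 0 len)) (tups m len) end.

Lemma tups_complete n len t : (forall j, (j < n)%nat -> (t j < len)%nat) ->
  exists t', In t' (tups n len) /\ forall j, (j < n)%nat -> t' j = t j.
Proof. revert t; induction n; intros t H.
 - exists (fun _ => O). split; [left; auto|]. intros; lia.
 - destruct (IHn t) as [t' [Hin Heq]]. { intros; apply H; lia. }
   exists (fun j => if Nat.eqb j n then t n else t' j). split.
   + simpl. apply in_flat_map. exists t'. split; auto.
     apply (in_map (fun p => fun j => if Nat.eqb j n then p else t' j)). apply in_seq. specialize (H n). lia.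
   + intros j Hj. destruct (Nat.eqb_spec j n). { subst; auto. } apply Heq; lia. Qed.

Lemma Rpower_between x n : 0 < x -> (1 <= n)%nat ->
  Rabs (Rpower x (/ INR n) - 1) <= Rabs (x - 1).
Proof. intros Hx Hn.
 assert (Hn' : 0 < / INR n <= 1).
 { split. apply Rinv_0_lt_compat, lt_0_INR; lia. rewrite <- Rinv_1. apply Rinv_le_contravar; [lra|].
   change 1 with (INR 1). apply le_INR; auto. }
 destruct (Rle_dec 1 x).
 - assert (Rpower x 0 <= Rpower x (/ INR n) <= Rpower x 1) by (split; apply Rle_Rpower; lra).
   rewrite Rpower_O, Rpower_1 in H by lra. rewrite !Rabs_right by lra. lra.
 - assert (Hx' : 1 <= / x). { rewrite <- Rinv_1. apply Rinv_le_contravar; lra. }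
   assert (Rpower (/x) 0 <= Rpower (/x) (/ INR n) <= Rpower (/x) 1) by (split; apply Rle_Rpower; lra).
   rewrite Rpower_O, Rpower_1 in H by (apply Rinv_0_lt_compat; lra).
   assert (E : Rpower (/ x) (/ INR n) = / Rpower x (/ INR n)).
   { unfold Rpower. rewrite ln_Rinv by lra. rewrite <- exp_Ropp. f_equal; ring. }
   rewrite E in H. set (y := Rpower x (/ INR n)) in *.
   assert (Hy : 0 < y) by (unfold y, Rpower; apply exp_pos).
   destruct H as [H1 H2].
   assert (y <= 1). { destruct (Rle_dec y 1); auto. assert (/ y < 1). { rewrite <- Rinv_1. apply Rinv_lt_contravar; lra. } lra. }
   assert (x <= y). { destruct (Rle_dec x y); auto. assert (/ x < / y) by (apply Rinv_lt_contravar; nra). lra. }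
   rewrite !Rabs_left1 by lra. lra.
Qed.

Lemma tups_sound n len t : In t (tups n len) -> forall j, (j < n)%nat -> (t j < len)%nat.
Proof. revert t; induction n; intros t Hin j Hj; [lia|].
 simpl in Hin. apply in_flat_map in Hin. destruct Hin as [t0 [Ht0 Hin]].
 apply in_map_iff in Hin. destruct Hin as [p [<- Hp]]. apply in_seq in Hp.
 destruct (Nat.eqb_spec j n). lia. apply IHn; auto; lia. Qed.


Lemma mat_zvec_zeq n M w w' : zeq n w w' -> forall k, mat_zvec n M w k = mat_zvec n M w' k.
Proof. intros H k. unfold mat_zvec. apply rsum_ext. intros j Hj. rewrite H; auto. Qed.

Lemma sq_zeq n M w w' : zeq n w w' -> sq n (mat_zvec n M w) = sq n (mat_zvec n M w').
Proof. intros H. unfold sq, dot. apply rsum_ext. intros. rewrite (mat_zvec_zeq n M w w' H). auto. Qed.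

Lemma znonzero_zeq n w w' : zeq n w w' -> znonzero n w -> znonzero n w'.
Proof. intros H [k [Hk Hw]]. exists k. split; auto. rewrite <- H; auto. Qed.

Lemma in_S1_iff n M v0 : in_S1 n M v0 ->
  (forall w, znonzero n w -> sq n (mat_zvec n M v0) <= sq n (mat_zvec n M w)) /\
  (forall w, in_S1 n M w <-> znonzero n w /\ sq n (mat_zvec n M w) = sq n (mat_zvec n M v0)).
Proof. intros [Hnz Hmin]. split.
 - intros w Hw. apply norm_le_iff. auto.
 - intros w. split.
   + intros [Hw Hwm]. split; auto. apply Rle_antisym; apply norm_le_iff; auto.
   + intros [Hw Heq]. split; auto. intros w' Hw'. apply norm_le_iff. rewrite Heq. apply norm_le_iff; auto. Qed.

Lemma zvec_recover n A Ai w k : (forall i k, (i < n)%nat -> (k < n)%nat -> rsum n (fun j => Ai i j * A j k) = delta i k) ->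
  (k < n)%nat -> IZR (w k) = rsum n (fun l => Ai k l * mat_zvec n A w l).
Proof. intros H Hk. symmetry. apply (matvec_inv n Ai A (zr w) k H Hk). Qed.

Lemma sq_pos n A Ai w : (forall i k, (i < n)%nat -> (k < n)%nat -> rsum n (fun j => Ai i j * A j k) = delta i k) ->
  znonzero n w -> 0 < sq n (mat_zvec n A w).
Proof. intros H [k [Hk Hw]]. destruct (sq_nonneg n (mat_zvec n A w)) as [|E]; auto. exfalso.
 assert (Hz : forall l, (l < n)%nat -> mat_zvec n A w l = 0).
 { intros l Hl. pose proof (comp_le_norm n (mat_zvec n A w) l Hl). rewrite <- E, sqrt_0 in H0.
   pose proof (Rabs_pos (mat_zvec n A w l)). destruct (Rcase_abs (mat_zvec n A w l)); [rewrite Rabs_left in H0 by lra|rewrite Rabs_right in H0 by lra]; lra. }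
 apply Hw. apply eq_IZR. rewrite (zvec_recover n A Ai w k H Hk).
 rewrite (rsum_ext n _ (fun _ => 0)). apply rsum_zero. intros l Hl. rewrite Hz; auto; ring. Qed.

Lemma zvec_bound n A Ai w k : (forall i k, (i < n)%nat -> (k < n)%nat -> rsum n (fun j => Ai i j * A j k) = delta i k) ->
  (k < n)%nat -> Rabs (IZR (w k)) <= rsum n (fun k => rsum n (fun l => Rabs (Ai k l))) * sqrt (sq n (mat_zvec n A w)).
Proof. intros H Hk. rewrite (zvec_recover n A Ai w k H Hk).
 eapply Rle_trans; [apply rsum_abs|].
 apply Rle_trans with (rsum n (fun l => Rabs (Ai k l) * sqrt (sq n (mat_zvec n A w)))).
 - apply rsum_le. intros l Hl. rewrite Rabs_mult. apply Rmult_le_compat_l; [apply Rabs_pos|]. apply comp_le_norm; auto.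
 - rewrite rsum_scal_r. apply Rmult_le_compat_r; [apply sqrt_pos|].
   apply (rsum_term_le n (fun k => rsum n (fun l => Rabs (Ai k l)))); auto.
   intros; apply rsum_nonneg; intros; apply Rabs_pos. Qed.

Lemma box_bound n A Ai (m : R) : (forall i k, (i < n)%nat -> (k < n)%nat -> rsum n (fun j => Ai i j * A j k) = delta i k) ->
  exists N : nat, forall w, sq n (mat_zvec n A w) <= m -> forall k, (k < n)%nat -> (Z.abs (w k) <= Z.of_nat N)%Z.
Proof. intros H.
 set (Kb := rsum n (fun k => rsum n (fun l => Rabs (Ai k l)))).
 assert (HKb : 0 <= Kb) by (apply rsum_nonneg; intros; apply rsum_nonneg; intros; apply Rabs_pos).
 destruct (archimed (Kb * sqrt (Rmax m 0))) as [Hup _].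
 exists (Z.to_nat (up (Kb * sqrt (Rmax m 0)))). intros w Hw k Hk.
 pose proof (zvec_bound n A Ai w k H Hk) as Hb. fold Kb in Hb.
 assert (Kb * sqrt (sq n (mat_zvec n A w)) <= Kb * sqrt (Rmax m 0)).
 { apply Rmult_le_compat_l; auto. apply sqrt_le_1_alt. pose proof (Rmax_l m 0); lra. }
 rewrite <- abs_IZR in Hb.
 assert (IZR (Z.abs (w k)) < IZR (up (Kb * sqrt (Rmax m 0)))) by lra.
 apply lt_IZR in H1. lia. Qed.

Lemma stage1 n A : (1 <= n)%nat -> det n A = 1 -> well_rounded n A ->
 exists (Ai : nat -> nat -> R) (m m2 : R) (v : nat -> nat -> Z) (Yi : nat -> nat -> R),
 (forall i k, (i < n)%nat -> (k < n)%nat -> rsum n (fun j => Ai i j * A j k) = delta i k) /\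
 0 < m /\ m < m2 /\
 (forall w, znonzero n w -> m <= sq n (mat_zvec n A w)) /\
 (forall w, znonzero n w -> sq n (mat_zvec n A w) <> m -> m2 <= sq n (mat_zvec n A w)) /\
 (forall j, (j < n)%nat -> znonzero n (v j) /\ sq n (mat_zvec n A (v j)) = m) /\
 (forall i k, (i < n)%nat -> (k < n)%nat -> rsum n (fun j => Yi i j * mat_zvec n A (v k) j) = delta i k) /\
 (forall i k, (i < n)%nat -> (k < n)%nat -> rsum n (fun j => mat_zvec n A (v j) i * Yi j k) = delta i k) /\
 (forall w, znonzero n w -> sq n (mat_zvec n A w) = m -> forall i, (i < n)%nat ->
     rsum n (fun k => Yi i k * mat_zvec n A w k) <> 0 -> 1 <= Rabs (rsum n (fun k => Yi i k * mat_zvec n A w k))).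
Proof.
 intros Hn HdetA HWR.
 destruct (det_inv n A) as [Ai [HAiA HAAi]]. { rewrite HdetA; lra. }
 destruct (HWR (fun _ => 1)) as [l [Hl Hx]].
 assert (Hv0 : exists v0, in_S1 n A v0).
 { destruct l as [|p l']. { specialize (Hx 0%nat ltac:(lia)). simpl in Hx. lra. }
   exists (fst p). apply Hl. left; auto. }
 destruct Hv0 as [v0 Hv0].
 destruct (in_S1_iff n A v0 Hv0) as [Hmin HS1].
 set (m := sq n (mat_zvec n A v0)) in *.
 assert (Hm : 0 < m) by (apply (sq_pos n A Ai); auto; apply Hv0).
 destruct (box_bound n A Ai (m + 1) HAiA) as [N HN].
 set (Box := zbox n N).
 assert (Hbox : forall w, sq n (mat_zvec n A w) <= m + 1 -> exists w', In w' Box /\ zeq n w w').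
 { intros w Hw. apply zbox_complete. apply HN; auto. }
 destruct (list_filter_ex Box (in_S1 n A)) as [Lz HLz].
 assert (HLzS : forall w, in_S1 n A w -> exists w', In w' Lz /\ zeq n w w').
 { intros w Hw. destruct (Hbox w) as [w' [Hin Heq]].
   { apply HS1 in Hw. destruct Hw as [_ ->]. lra. }
   exists w'. split; auto. apply HLz. split; auto. apply HS1. apply HS1 in Hw. destruct Hw as [Hw1 Hw2].
   split. eapply znonzero_zeq; eauto. rewrite <- (sq_zeq n A w w' Heq). auto. }
 set (LR := map zr Lz).
 assert (Hspan : forall x, inspan n LR x).
 { intros x. destruct (HWR x) as [l1 [Hl1 Hx1]].
   apply (ispext n LR (fun k => fold_right (fun p acc => snd p * IZR (fst p k) + acc) 0 l1)).
   { intros k Hk; symmetry; auto. }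
   clear Hx1. induction l1 as [|p l1 IH]. { simpl. apply isp0. }
   simpl. destruct (HLzS (fst p)) as [w' [Hw' Heq]]. { apply Hl1; left; auto. }
   apply (ispext n LR (fun k => snd p * zr w' k + fold_right (fun p acc => snd p * IZR (fst p k) + acc) 0 l1)).
   { intros k Hk. unfold zr. rewrite Heq; auto. }
   apply ispadd. { apply in_map; auto. } apply IH. intros q Hq; apply Hl1; right; auto. }
 destruct (span_det n LR Hspan) as [f [Hf Hdetf]].
 set (Yt := fun (t : nat -> nat) k j => mat_zvec n A (nth (t j) Lz (fun _ => 0%Z)) k).
 assert (HYt : forall t, det n (Yt t) = det n (fun k j => IZR (nth (t j) Lz (fun _ => 0%Z) k))).
 { intros t. unfold Yt, mat_zvec. rewrite det_mul, HdetA. ring. }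
 assert (HlenLR : length LR = length Lz) by (unfold LR; apply length_map).
 destruct (list_min (tups n (length Lz)) (fun t => det n (Yt t) <> 0) (fun t => Rabs (det n (Yt t)))) as [ts [Hts [Hdts Hmints]]].
 { destruct (tups_complete n (length Lz) f) as [t' [Ht' Heq]]. { intros; rewrite <- HlenLR; auto. }
   exists t'. split; auto. rewrite HYt.
   rewrite (det_ext n _ (fun k j => nth (f j) LR (fun _ => 0) k)). { exact Hdetf. }
   intros k j Hk Hj. rewrite Heq; auto. unfold LR.
   change (fun _ : nat => 0) with (zr (fun _ => 0%Z)). rewrite map_nth. reflexivity. }
 assert (Hmints' : forall t, (forall j, (j < n)%nat -> (t j < length Lz)%nat) -> det n (Yt t) <> 0 ->
            Rabs (det n (Yt ts)) <= Rabs (det n (Yt t))).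
 { intros t Ht Hd. destruct (tups_complete n (length Lz) t Ht) as [t' [Ht' Heq]].
   assert (E : det n (Yt t') = det n (Yt t)).
   { apply det_ext. intros k j Hk Hj. unfold Yt. rewrite Heq; auto. }
   rewrite <- E. apply Hmints; auto. rewrite E; auto. }
 pose proof (tups_sound n (length Lz) ts Hts) as Htsb.
 set (v := fun j => nth (ts j) Lz (fun _ => 0%Z)).
 assert (Hv : forall j, (j < n)%nat -> in_S1 n A (v j)).
 { intros j Hj. apply HLz. apply nth_In. auto. }
 destruct (det_inv n (Yt ts) Hdts) as [Yi [HYiY HYYi]].
 destruct (list_gap Box (fun w => sq n (mat_zvec n A w)) m) as [m2 [Hm2 [Hm21 Hgap]]].
 exists Ai, m, m2, v, Yi.
 split; [auto|]. split; [auto|]. split; [auto|].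
 split. { intros w Hw. apply Hmin; auto. }
 split.
 { intros w Hw Hne. assert (m < sq n (mat_zvec n A w)) by (pose proof (Hmin w Hw); lra).
   destruct (Rle_dec (sq n (mat_zvec n A w)) (m + 1)).
   - destruct (Hbox w r) as [w' [Hin Heq]]. rewrite (sq_zeq n A w w' Heq) in *. apply Hgap; auto.
   - lra. }
 split. { intros j Hj. apply HS1. apply Hv; auto. }
 split. { exact HYiY. }
 split. { exact HYYi. }
 intros w Hw Hwm i Hi Hc.
 destruct (HLzS w) as [w' [Hw' Heq]]. { apply HS1; auto. }
 destruct (In_nth Lz w' (fun _ => 0%Z) Hw') as [p [Hp Hnp]].
 set (c := fun l => rsum n (fun k => Yi l k * mat_zvec n A w k)) in *.
 set (t' := fun j => if Nat.eqb j i then p else ts j).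
 assert (Hdt' : det n (Yt t') = c i * det n (Yt ts)).
 { rewrite <- (det_replace n (Yt ts) c i Hi). apply det_ext. intros k j Hk Hj.
   replace (Yt t' k j) with (if Nat.eqb j i then mat_zvec n A w' k else Yt ts k j)
     by (unfold Yt, t'; destruct (Nat.eqb j i); [rewrite Hnp|]; reflexivity).
   destruct (Nat.eqb j i).
   - rewrite <- (mat_zvec_zeq n A w w' Heq).
     symmetry. apply (matvec_inv n (Yt ts) Yi (mat_zvec n A w) k HYYi Hk).
   - reflexivity. }
 assert (Hne : det n (Yt t') <> 0). { rewrite Hdt'. apply Rmult_integral_contrapositive; split; auto. }
 assert (Ht'b : forall j, (j < n)%nat -> (t' j < length Lz)%nat).
 { intros j Hj. unfold t'. destruct (Nat.eqb j i); auto. }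
 pose proof (Hmints' t' Ht'b Hne) as Hle. rewrite Hdt', Rabs_mult in Hle.
 assert (0 < Rabs (det n (Yt ts))) by (apply Rabs_pos_lt; auto).
 change (1 <= Rabs (c i)). nra.
Qed.


Lemma d_props s a : 0 <= s * a <= 1 ->
  let d := 2 / (1 + sqrt (1 + 2 * s * a)) in 1/2 < d <= 1 /\ s * a * d^2 + 2 * d = 2.
Proof. intros Hsa d.
 set (r := sqrt (1 + 2 * s * a)) in *.
 assert (Hr2 : r * r = 1 + 2 * s * a) by (unfold r; apply sqrt_sqrt; lra).
 assert (Hr1 : 1 <= r). { unfold r. apply (Rle_trans _ (sqrt 1)); [rewrite sqrt_1; lra| apply sqrt_le_1_alt; lra]. }
 assert (Hr3 : r < 3) by nra.
 assert (Hd : d * (1 + r) = 2) by (unfold d; field; lra).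
 split. - split; nra.
 - unfold d. replace (s * a) with ((r * r - 1) / 2) by lra. field. lra. Qed.

Lemma rsum_shift n g : rsum (S n) g = g 0%nat + rsum n (fun j => g (S j)).
Proof. induction n. - simpl. ring. - cbn [rsum] in *. rewrite IHn. ring. Qed.

Lemma fold_seq (v : nat -> nat -> Z) (c : nat -> R) k n a :
  fold_right (fun p acc => snd p * IZR (fst p k) + acc) 0 (map (fun j => (v j, c j)) (seq a n))
  = rsum n (fun j => c (a + j)%nat * IZR (v (a + j)%nat k)).
Proof. revert a; induction n; intros a. - reflexivity.
 - simpl seq. simpl map. simpl fold_right. rewrite IHn, rsum_shift. simpl snd; simpl fst.
   rewrite Nat.add_0_r. f_equal. apply rsum_ext. intros j _. rewrite Nat.add_succ_r. reflexivity. Qed.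

Lemma mat_zvec_opp n M w k : mat_zvec n M (fun i => (- w i)%Z) k = - mat_zvec n M w k.
Proof. unfold mat_zvec. rewrite <- rsum_opp. apply rsum_ext. intros. rewrite opp_IZR. ring. Qed.

Lemma B0_apply n A Yi (d : nat -> R) s w k :
  mat_zvec n (fun k l => A k l + s * rsum n (fun i => d i * Yi i k * rsum n (fun p => Yi i p * A p l))) w k
  = mat_zvec n A w k + s * rsum n (fun i => d i * rsum n (fun q => Yi i q * mat_zvec n A w q) * Yi i k).
Proof. unfold mat_zvec.
 rewrite (rsum_ext n _ (fun l => A k l * IZR (w l) + s * rsum n (fun i => d i * Yi i k * rsum n (fun p => Yi i p * A p l) * IZR (w l)))).
 2:{ intros l _. rewrite rsum_scal_r. ring. }
 rewrite rsum_plus, rsum_scal. f_equal. f_equal. rewrite rsum_swap. apply rsum_ext. intros i _.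
 rewrite (rsum_ext n _ (fun l => d i * Yi i k * (rsum n (fun p => Yi i p * A p l) * IZR (w l)))) by (intros; ring).
 rewrite rsum_scal.
 rewrite (rsum_ext n (fun l => rsum n (fun p => Yi i p * A p l) * IZR (w l)) (fun l => rsum n (fun p => Yi i p * A p l * IZR (w l)))) by (intros; rewrite rsum_scal_r; auto).
 rewrite rsum_swap.
 rewrite (rsum_ext n (fun p => rsum n (fun l => Yi i p * A p l * IZR (w l))) (fun p => Yi i p * rsum n (fun l => A p l * IZR (w l)))).
 2:{ intros p _. rewrite <- rsum_scal. apply rsum_ext; intros; ring. }
 ring. Qed.

Lemma dot_expand n (x : nat -> R) Yi (e : nat -> R) :
  dot n x (fun k => rsum n (fun i => e i * Yi i k)) = rsum n (fun i => e i * rsum n (fun q => Yi i q * x q)).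
Proof. unfold dot.
 rewrite (rsum_ext n _ (fun k => rsum n (fun i => x k * (e i * Yi i k)))) by (intros; rewrite rsum_scal; auto).
 rewrite rsum_swap. apply rsum_ext. intros i _. rewrite <- rsum_scal. apply rsum_ext; intros; ring. Qed.


Lemma stage2 n A Ai m m2 (v : nat -> nat -> Z) Yi eps : (1 <= n)%nat -> det n A = 1 -> 0 < eps ->
 (forall i k, (i < n)%nat -> (k < n)%nat -> rsum n (fun j => Ai i j * A j k) = delta i k) ->
 0 < m -> m < m2 ->
 (forall w, znonzero n w -> m <= sq n (mat_zvec n A w)) ->
 (forall w, znonzero n w -> sq n (mat_zvec n A w) <> m -> m2 <= sq n (mat_zvec n A w)) ->
 (forall j, (j < n)%nat -> znonzero n (v j) /\ sq n (mat_zvec n A (v j)) = m) ->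
 (forall i k, (i < n)%nat -> (k < n)%nat -> rsum n (fun j => Yi i j * mat_zvec n A (v k) j) = delta i k) ->
 (forall i k, (i < n)%nat -> (k < n)%nat -> rsum n (fun j => mat_zvec n A (v j) i * Yi j k) = delta i k) ->
 (forall w, znonzero n w -> sq n (mat_zvec n A w) = m -> forall i, (i < n)%nat ->
     rsum n (fun k => Yi i k * mat_zvec n A w k) <> 0 -> 1 <= Rabs (rsum n (fun k => Yi i k * mat_zvec n A w k))) ->
 exists B : nat -> nat -> R,
      det n B = 1 /\ well_rounded n B /\
      (forall i j, (i < n)%nat -> (j < n)%nat -> Rabs (B i j - A i j) < eps) /\
        lin_indep n v /\
        forall w : nat -> Z,
          in_S1 n B w <->
          exists i, (i < n)%nat /\ (zeq n w (v i) \/ zeq n w (fun k => (- v i k)%Z)).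
Proof.
 intros Hn HdetA Heps HAiA Hm Hm2 Hmin Hgap Hv HYiY HYYi HMD.
 set (c := fun w i => rsum n (fun k => Yi i k * mat_zvec n A w k)).
 set (a := fun i => sq n (fun k => Yi i k)).
 set (Sa := rsum n a).
 assert (HSa : 0 <= Sa) by (apply rsum_nonneg; intros; apply sq_nonneg).
 assert (Ha : forall i, (i < n)%nat -> 0 <= a i <= Sa).
 { intros i Hi. split. apply sq_nonneg. apply rsum_term_le; auto. intros; apply sq_nonneg. }
 set (KA := 1 + rsum n (fun p => rsum n (fun l => Rabs (A p l)))).
 set (Kx := 1 + rsum n (fun i => rsum n (fun k => Rabs (Yi i k)))).
 assert (HKA : forall p l, (p < n)%nat -> (l < n)%nat -> Rabs (A p l) <= KA - 1).
 { intros p l Hp Hl. unfold KA. replace (1 + _ - 1) with (rsum n (fun p => rsum n (fun l => Rabs (A p l)))) by ring.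
   apply Rle_trans with (rsum n (fun l => Rabs (A p l))).
   - apply (rsum_term_le n (fun l => Rabs (A p l))); auto; intros; apply Rabs_pos.
   - apply (rsum_term_le n (fun p => rsum n (fun l => Rabs (A p l)))); auto. intros; apply rsum_nonneg; intros; apply Rabs_pos. }
 assert (HKx : forall p l, (p < n)%nat -> (l < n)%nat -> Rabs (Yi p l) <= Kx).
 { intros p l Hp Hl. unfold Kx.
   apply Rle_trans with (rsum n (fun l => Rabs (Yi p l))).
   - apply (rsum_term_le n (fun l => Rabs (Yi p l))); auto; intros; apply Rabs_pos.
   - assert (rsum n (fun l => Rabs (Yi p l)) <= rsum n (fun p => rsum n (fun l => Rabs (Yi p l)))).
     { apply (rsum_term_le n (fun p => rsum n (fun l => Rabs (Yi p l)))); auto. intros; apply rsum_nonneg; intros; apply Rabs_pos. }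
     lra. }
 assert (HKA1 : 1 <= KA) by (unfold KA; pose proof (rsum_nonneg n (fun p => rsum n (fun l => Rabs (A p l)))); 
   assert (0 <= rsum n (fun p => rsum n (fun l => Rabs (A p l)))) by (apply rsum_nonneg; intros; apply rsum_nonneg; intros; apply Rabs_pos); lra).
 assert (HKx1 : 1 <= Kx) by (unfold Kx; assert (0 <= rsum n (fun i => rsum n (fun k => Rabs (Yi i k)))) by (apply rsum_nonneg; intros; apply rsum_nonneg; intros; apply Rabs_pos); lra).
 set (C0 := INR n * (Kx * (INR n * (Kx * KA)))).
 assert (HC0 : 0 <= C0).
 { unfold C0. pose proof (pos_INR n). apply Rmult_le_pos; auto. apply Rmult_le_pos; [lra|]. apply Rmult_le_pos; auto. apply Rmult_le_pos; lra. }
 set (eta := Rmin (1/2) (eps / (4 * (KA + 1)))).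
 assert (Heta : 0 < eta) by (apply Rmin_pos; [lra| apply Rdiv_lt_0_compat; lra]).
 destruct (det_cont n A eta Heta) as [del [Hdel Hcont]].
 set (s := Rmin (Rmin (1 / (1 + Sa)) ((m2 - m) / 4)) (Rmin del (Rmin (eps / 2) 1) / (2 * (C0 + 1)))).
 assert (Hs0 : 0 < s).
 { unfold s. apply Rmin_pos; apply Rmin_pos || idtac.
   all: try (apply Rdiv_lt_0_compat; lra).
   apply Rdiv_lt_0_compat; [|lra]. apply Rmin_pos; auto. apply Rmin_pos; lra. }
 assert (Hs1 : s * (1 + Sa) <= 1).
 { assert (s <= 1 / (1 + Sa)) by (unfold s; eapply Rle_trans; [apply Rmin_l|apply Rmin_l]).
   apply Rmult_le_compat_r with (r := 1 + Sa) in H; [|lra]. unfold Rdiv in H. rewrite Rmult_assoc, Rinv_l in H by lra. lra. }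
 assert (Hs2 : 4 * s <= m2 - m).
 { assert (s <= (m2 - m) / 4) by (unfold s; eapply Rle_trans; [apply Rmin_l|apply Rmin_r]). lra. }
 assert (Hs3 : s * C0 < Rmin del (Rmin (eps / 2) 1)).
 { assert (s <= Rmin del (Rmin (eps / 2) 1) / (2 * (C0 + 1))) by (unfold s; apply Rmin_r).
   assert (0 < Rmin del (Rmin (eps / 2) 1)) by (apply Rmin_pos; auto; apply Rmin_pos; lra).
   apply Rle_lt_trans with (Rmin del (Rmin (eps / 2) 1) / (2 * (C0 + 1)) * (C0 + 1)).
   - apply Rle_trans with (s * (C0 + 1)); [nra|]. apply Rmult_le_compat_r; lra.
   - replace (Rmin del (Rmin (eps / 2) 1) / (2 * (C0 + 1)) * (C0 + 1)) with (Rmin del (Rmin (eps / 2) 1) / 2) by (field; lra). lra. }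
 assert (Hs3a : s * C0 < del) by (eapply Rlt_le_trans; [exact Hs3|apply Rmin_l]).
 assert (Hs3b : s * C0 < eps / 2) by (eapply Rlt_le_trans; [exact Hs3|]; eapply Rle_trans; [apply Rmin_r|apply Rmin_l]).
 assert (Hs3c : s * C0 < 1) by (eapply Rlt_le_trans; [exact Hs3|]; eapply Rle_trans; [apply Rmin_r|apply Rmin_r]).
 set (d := fun i => 2 / (1 + sqrt (1 + 2 * s * a i))).
 assert (Hd : forall i, (i < n)%nat -> 1/2 < d i <= 1 /\ s * a i * (d i)^2 + 2 * d i = 2).
 { intros i Hi. apply (d_props s (a i)). destruct (Ha i Hi). split; [nra|]. nra. }
 set (B0 := fun k l => A k l + s * rsum n (fun i => d i * Yi i k * rsum n (fun p => Yi i p * A p l))).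
 assert (HB0sq : forall w, sq n (mat_zvec n B0 w) = sq n (mat_zvec n A w) + 2 * s * rsum n (fun i => d i * c w i * c w i)
     + s^2 * sq n (fun k => rsum n (fun i => d i * c w i * Yi i k))).
 { intros w. rewrite (sq_ext n _ (fun k => mat_zvec n A w k + s * rsum n (fun i => d i * c w i * Yi i k))).
   2:{ intros k Hk. unfold B0. rewrite B0_apply. reflexivity. }
   rewrite sq_add. f_equal. f_equal.
   rewrite (dot_expand n (mat_zvec n A w) Yi (fun i => d i * c w i)). reflexivity. }
 assert (HB0ge : forall w, sq n (mat_zvec n A w) + 2 * s * rsum n (fun i => d i * c w i * c w i) <= sq n (mat_zvec n B0 w)).
 { intros w. rewrite HB0sq. pose proof (sq_nonneg n (fun k => rsum n (fun i => d i * c w i * Yi i k))). nra. }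
 assert (Hcv : forall i j, (i < n)%nat -> (j < n)%nat -> c (v j) i = delta i j).
 { intros i j Hi Hj. apply HYiY; auto. }
 assert (HB0v : forall j, (j < n)%nat -> sq n (mat_zvec n B0 (v j)) = m + 2 * s).
 { intros j Hj. rewrite HB0sq. destruct (Hv j Hj) as [_ ->].
   rewrite (rsum_single n _ j Hj).
   2:{ intros i Hi Hij. rewrite Hcv by auto. unfold delta. destruct (Nat.eqb_spec i j); [lia|ring]. }
   rewrite (sq_ext n _ (fun k => d j * Yi j k)).
   2:{ intros k Hk. rewrite (rsum_single n _ j Hj). rewrite Hcv by auto. unfold delta. rewrite Nat.eqb_refl. ring.
       intros i Hi Hij. rewrite Hcv by auto. unfold delta. destruct (Nat.eqb_spec i j); [lia|ring]. }
   rewrite sq_scal. rewrite Hcv by auto. unfold delta. rewrite Nat.eqb_refl.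
   destruct (Hd j Hj) as [_ Hdj]. change (sq n (Yi j)) with (a j).
   replace (m + 2 * s * (d j * 1 * 1) + s ^ 2 * (d j ^ 2 * a j)) with (m + s * (s * a j * d j ^ 2 + 2 * d j)) by ring.
   rewrite Hdj. ring. }
 assert (Hexp : forall w k, (k < n)%nat -> mat_zvec n A w k = rsum n (fun l => mat_zvec n A (v l) k * c w l)).
 { intros w k Hk. symmetry. exact (matvec_inv n (fun k l => mat_zvec n A (v l) k) Yi (mat_zvec n A w) k HYYi Hk). }
 assert (HeqA : forall w w', (forall k, (k < n)%nat -> mat_zvec n A w k = mat_zvec n A w' k) -> zeq n w w').
 { intros w w' H k Hk. apply eq_IZR. rewrite (zvec_recover n A Ai w k HAiA Hk), (zvec_recover n A Ai w' k HAiA Hk).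
   apply rsum_ext. intros l Hl. rewrite H; auto. }
 assert (Hkey : forall w, znonzero n w -> ~ (exists j, (j < n)%nat /\ (zeq n w (v j) \/ zeq n w (fun k => (- v j k)%Z))) ->
           m + 2 * s < sq n (mat_zvec n B0 w)).
 { intros w Hw Hnot. pose proof (HB0ge w) as Hge.
   assert (Hsum0 : 0 <= rsum n (fun i => d i * c w i * c w i)).
   { apply rsum_nonneg; intros i Hi. destruct (Hd i Hi) as [[Hd1 Hd2] _].
     assert (0 <= c w i * c w i) by nra. nra. }
   destruct (Req_dec (sq n (mat_zvec n A w)) m) as [Em|Em].
   2:{ pose proof (Hgap w Hw Em). nra. }
   destruct (classic (exists i j, (i < n)%nat /\ (j < n)%nat /\ i <> j /\ c w i <> 0 /\ c w j <> 0))
     as [[i [j [Hi [Hj [Hij [Hci Hcj]]]]]]|Hno].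
   - pose proof (HMD w Hw Em i Hi Hci) as Hi1. pose proof (HMD w Hw Em j Hj Hcj) as Hj1.
     change (1 <= Rabs (c w i)) in Hi1. change (1 <= Rabs (c w j)) in Hj1.
     assert (Hi2 : 1 <= c w i * c w i). { replace (c w i * c w i) with (Rabs (c w i) * Rabs (c w i)) by (rewrite <- Rabs_mult; apply Rabs_right; nra). nra. }
     assert (Hj2 : 1 <= c w j * c w j). { replace (c w j * c w j) with (Rabs (c w j) * Rabs (c w j)) by (rewrite <- Rabs_mult; apply Rabs_right; nra). nra. }
     pose proof (rsum_two_le n (fun i => d i * c w i * c w i) i j) as H2.
     assert (Hnn : forall k, (k < n)%nat -> 0 <= d k * c w k * c w k).
     { intros k Hk. destruct (Hd k Hk) as [[Hd1 Hd2] _]. assert (0 <= c w k * c w k) by nra. nra. }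
     specialize (H2 Hnn Hi Hj Hij). simpl in H2.
     destruct (Hd i Hi) as [[Hdi _] _]. destruct (Hd j Hj) as [[Hdj _] _].
     assert (1 < rsum n (fun i => d i * c w i * c w i)) by nra. nra.
   - exfalso. destruct (classic (exists i, (i < n)%nat /\ c w i <> 0)) as [[i [Hi Hci]]|Hall].
     + assert (Hoth : forall j, (j < n)%nat -> j <> i -> c w j = 0).
       { intros j Hj Hji. apply NNPP. intros Hcj. apply Hno. exists i, j. repeat split; auto. }
       assert (Hcol : forall k, (k < n)%nat -> mat_zvec n A w k = c w i * mat_zvec n A (v i) k).
       { intros k Hk. rewrite Hexp by auto. rewrite (rsum_single n _ i Hi). ring.
         intros j Hj Hji. rewrite Hoth by auto. ring. }
       assert (Hsq : sq n (mat_zvec n A w) = c w i ^ 2 * m).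
       { rewrite (sq_ext n _ (fun k => c w i * mat_zvec n A (v i) k)) by auto. rewrite sq_scal.
         destruct (Hv i Hi) as [_ ->]. reflexivity. }
       rewrite Em in Hsq.
       assert (Hc2 : (c w i - 1) * (c w i + 1) = 0) by nra.
       apply Rmult_integral in Hc2. apply Hnot. exists i. split; auto. destruct Hc2 as [E|E].
       * left. apply HeqA. intros k Hk. rewrite Hcol by auto. replace (c w i) with 1 by lra. ring.
       * right. apply HeqA. intros k Hk. rewrite Hcol by auto. rewrite mat_zvec_opp. replace (c w i) with (-1) by lra. ring.
     + assert (Hz : forall k, (k < n)%nat -> mat_zvec n A w k = 0).
       { intros k Hk. rewrite Hexp by auto. rewrite (rsum_ext n _ (fun _ => 0)). apply rsum_zero.
         intros l Hl. destruct (Req_dec (c w l) 0) as [E|E]. rewrite E; ring. exfalso; apply Hall; eauto. }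
       assert (sq n (mat_zvec n A w) = 0).
       { unfold sq, dot. rewrite (rsum_ext n _ (fun _ => 0)). apply rsum_zero. intros k Hk. rewrite Hz; auto; ring. }
       lra. }
 assert (HB0close : forall k l, (k < n)%nat -> (l < n)%nat -> Rabs (B0 k l - A k l) <= s * C0).
 { intros k l Hk Hl. unfold B0. replace (A k l + s * rsum n (fun i => d i * Yi i k * rsum n (fun p => Yi i p * A p l)) - A k l)
     with (s * rsum n (fun i => d i * Yi i k * rsum n (fun p => Yi i p * A p l))) by ring.
   rewrite Rabs_mult, (Rabs_right s) by lra. apply Rmult_le_compat_l; [lra|]. unfold C0.
   apply rsum_bound. intros i Hi. rewrite !Rabs_mult.
   destruct (Hd i Hi) as [[Hd1 Hd2] _]. rewrite (Rabs_right (d i)) by lra.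
   assert (HX : Rabs (rsum n (fun p => Yi i p * A p l)) <= INR n * (Kx * KA)).
   { apply rsum_bound. intros p Hp. rewrite Rabs_mult. apply Rmult_le_compat; auto using Rabs_pos. pose proof (HKA p l Hp Hl); lra. }
   pose proof (HKx i k Hi Hk). pose proof (Rabs_pos (Yi i k)). pose proof (Rabs_pos (rsum n (fun p => Yi i p * A p l))).
   apply Rle_trans with (1 * Kx * (INR n * (Kx * KA))); [|lra].
   apply Rmult_le_compat; try nra. }
 assert (HdetB0 : Rabs (det n B0 - 1) < eta).
 { rewrite <- HdetA. apply Hcont. intros i j Hi Hj. eapply Rle_lt_trans; [apply HB0close; auto| auto]. }
 assert (Heta2 : eta <= 1/2) by apply Rmin_l.
 assert (Heta3 : eta <= eps / (4 * (KA + 1))) by apply Rmin_r.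
 assert (HdB0pos : 1/2 < det n B0) by (apply Rabs_def2 in HdetB0; lra).
 set (lam := Rpower (/ det n B0) (/ INR n)).
 assert (Hlam0 : 0 < lam) by (unfold lam, Rpower; apply exp_pos).
 assert (Hlamn : lam ^ n = / det n B0).
 { rewrite <- Rpower_pow by auto. unfold lam. rewrite Rpower_mult. rewrite Rinv_l by (apply not_0_INR; lia).
   rewrite Rpower_1; auto. apply Rinv_0_lt_compat; lra. }
 assert (Hlam1 : Rabs (lam - 1) <= 2 * eta).
 { eapply Rle_trans; [apply Rpower_between; auto; apply Rinv_0_lt_compat; lra|].
   replace (/ det n B0 - 1) with ((1 - det n B0) / det n B0) by (field; lra).
   unfold Rdiv. rewrite Rabs_mult, Rabs_inv, (Rabs_right (det n B0)) by lra.
   rewrite <- Rabs_Ropp, Ropp_minus_distr.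
   apply Rle_trans with (Rabs (det n B0 - 1) * 2).
   - apply Rmult_le_compat_l; [apply Rabs_pos|]. rewrite <- (Rinv_inv 2). apply Rinv_le_contravar; lra.
   - lra. }
 set (B := fun k l => lam * B0 k l).
 exists B.
 assert (HBz : forall w k, mat_zvec n B w k = lam * mat_zvec n B0 w k).
 { intros w k. unfold mat_zvec, B. rewrite <- rsum_scal. apply rsum_ext; intros; ring. }
 assert (HBsq : forall w, sq n (mat_zvec n B w) = lam ^ 2 * sq n (mat_zvec n B0 w)).
 { intros w. rewrite (sq_ext n _ (fun k => lam * mat_zvec n B0 w k)) by auto. apply sq_scal. }
 assert (HBle : forall w w', norm n (mat_zvec n B w) <= norm n (mat_zvec n B w') <-> sq n (mat_zvec n B0 w) <= sq n (mat_zvec n B0 w')).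
 { intros w w'. rewrite norm_le_iff, !HBsq. assert (0 < lam ^ 2) by (apply pow_lt; auto).
   split; intros; nra. }
 assert (Hval : forall w, (exists i, (i < n)%nat /\ (zeq n w (v i) \/ zeq n w (fun k => (- v i k)%Z))) ->
            sq n (mat_zvec n B0 w) = m + 2 * s /\ znonzero n w).
 { intros w [i [Hi [H|H]]].
   - assert (Hs : zeq n (v i) w) by (intros k Hk; symmetry; auto).
     split. rewrite (sq_zeq n B0 w (v i) H). auto. apply (znonzero_zeq n (v i) w Hs). apply Hv; auto.
   - split.
     + rewrite (sq_zeq n B0 w _ H). rewrite (sq_ext n _ (fun k => - mat_zvec n B0 (v i) k)) by (intros; apply mat_zvec_opp).
       rewrite sq_opp. auto.
     + destruct (proj1 (Hv i Hi)) as [k [Hk Hvk]]. exists k. split; auto. rewrite H by auto. lia. }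
 assert (Hlow : forall w, znonzero n w -> m + 2 * s <= sq n (mat_zvec n B0 w)).
 { intros w Hw. destruct (classic (exists i, (i < n)%nat /\ (zeq n w (v i) \/ zeq n w (fun k => (- v i k)%Z)))) as [E|E].
   - right. symmetry. apply Hval; auto.
   - left. apply Hkey; auto. }
 assert (Hchar : forall w, in_S1 n B w <-> exists i, (i < n)%nat /\ (zeq n w (v i) \/ zeq n w (fun k => (- v i k)%Z))).
 { intros w. split.
   - intros [Hw Hmin']. apply NNPP. intros Hnot. pose proof (Hkey w Hw Hnot).
     assert (H0 : (0 < n)%nat) by lia.
     pose proof (proj1 (HBle w (v 0%nat)) (Hmin' (v 0%nat) (proj1 (Hv 0%nat H0)))).
     rewrite HB0v in H1 by auto. lra.
   - intros E. destruct (Hval w E) as [Hs Hw]. split; auto. intros w' Hw'. apply HBle. rewrite Hs. apply Hlow; auto. }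
 split.
 { unfold B. rewrite det_scale, Hlamn. field. lra. }
 split.
 { intros x. set (c' := fun j => rsum n (fun k => Yi j k * matvec n A x k)).
   exists (map (fun j => (v j, c' j)) (seq 0 n)). split.
   - intros p Hp. apply in_map_iff in Hp. destruct Hp as [j [<- Hj]]. apply in_seq in Hj. simpl fst.
     apply Hchar. exists j. split; [lia|]. left. intros k Hk; reflexivity.
   - intros k Hk. rewrite fold_seq. simpl.
     apply (matvec_inj n A Ai x (fun k => rsum n (fun j => c' j * IZR (v j k))) HAiA); auto.
     intros k' Hk'. unfold matvec. symmetry.
     rewrite (rsum_ext n (fun j => A k' j * rsum n (fun j0 => c' j0 * IZR (v j0 j))) (fun j => rsum n (fun j0 => A k' j * (c' j0 * IZR (v j0 j))))).
     2:{ intros; rewrite rsum_scal; auto. }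
     rewrite rsum_swap.
     rewrite (rsum_ext n _ (fun j0 => mat_zvec n A (v j0) k' * c' j0)).
     2:{ intros j0 _. unfold mat_zvec. rewrite <- rsum_scal_r. apply rsum_ext; intros; ring. }
     exact (matvec_inv n (fun k l => mat_zvec n A (v l) k) Yi (matvec n A x) k' HYYi Hk'). }
 split.
 { intros i j Hi Hj. unfold B.
   replace (lam * B0 i j - A i j) with ((lam - 1) * B0 i j + (B0 i j - A i j)) by ring.
   eapply Rle_lt_trans; [apply Rabs_triang|]. rewrite Rabs_mult.
   pose proof (HB0close i j Hi Hj). pose proof (HKA i j Hi Hj).
   assert (HB0b : Rabs (B0 i j) <= KA).
   { replace (B0 i j) with (A i j + (B0 i j - A i j)) by ring. eapply Rle_trans; [apply Rabs_triang|]. lra. }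
   assert (Rabs (lam - 1) <= eps / (2 * (KA + 1))).
   { replace (eps / (2 * (KA + 1))) with (2 * (eps / (4 * (KA + 1)))) by (field; lra). lra. }
   assert (Rabs (lam - 1) * Rabs (B0 i j) <= eps / (2 * (KA + 1)) * KA) by (apply Rmult_le_compat; auto using Rabs_pos).
   assert (eps / (2 * (KA + 1)) * KA < eps / 2).
   { replace (eps / 2) with (eps / (2 * (KA + 1)) * (KA + 1)) by (field; lra).
     apply Rmult_lt_compat_l; [apply Rdiv_lt_0_compat; lra|lra]. }
   lra. }
 split.
 { intros cc H i Hi.
   rewrite <- (matvec_inv n Yi (fun j k => mat_zvec n A (v k) j) cc i HYiY Hi).
   rewrite (rsum_ext n _ (fun _ => 0)). apply rsum_zero.
   intros k Hk.
   assert (E : rsum n (fun j => mat_zvec n A (v j) k * cc j) = 0).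
   { unfold mat_zvec.
     rewrite (rsum_ext n _ (fun j => rsum n (fun p => A k p * (cc j * IZR (v j p))))).
     2:{ intros j _. rewrite <- rsum_scal_r. apply rsum_ext; intros; ring. }
     rewrite rsum_swap. rewrite (rsum_ext n _ (fun _ => 0)). apply rsum_zero.
     intros p Hp. rewrite rsum_scal. rewrite H; auto. ring. }
   rewrite E. ring. }
 exact Hchar.
Qed.


Theorem mainTheorem5 :
  forall (n : nat) (A : nat -> nat -> R),
    det n A = 1 -> well_rounded n A ->
    forall eps : R, 0 < eps ->
    exists B : nat -> nat -> R,
      det n B = 1 /\ well_rounded n B /\
      (forall i j, (i < n)%nat -> (j < n)%nat -> Rabs (B i j - A i j) < eps) /\
      exists v : nat -> nat -> Z,
        lin_indep n v /\
        forall w : nat -> Z,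
          in_S1 n B w <->
          exists i, (i < n)%nat /\ (zeq n w (v i) \/ zeq n w (fun k => (- v i k)%Z)).
Proof.
  intros n A HdetA HWR eps Heps.
  destruct n as [|n'].
  - exists A. split; auto. split; auto. split. { intros; lia. }
    exists (fun _ _ => 0%Z). split. { intros c _ i Hi; lia. }
    intros w. split.
    + intros [[k [Hk _]] _]; lia.
    + intros [i [Hi _]]; lia.
  - destruct (stage1 (S n') A ltac:(lia) HdetA HWR) as [Ai [m [m2 [v [Yi [H1 [H2 [H3 [H4 [H5 [H6 [H7 [H8 H9]]]]]]]]]]]]].
    destruct (stage2 (S n') A Ai m m2 v Yi eps ltac:(lia) HdetA Heps H1 H2 H3 H4 H5 H6 H7 H8 H9)
      as [B [HB1 [HB2 [HB3 [HB4 HB5]]]]].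
    exists B. split; auto. split; auto. split; auto. exists v. split; auto.
Qed.
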